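(* Let $P(z)=z(2z^2-9z+12)$ and consider the system on $[0,\infty)\times[0,\infty)$ \[ \dot x=-x+5+\frac{1}{1+z^2},\qquad \dot z=-P(z)+x . \] Then every trajectory is defined and bounded on $[0,\infty)$, and the system has a unique equilibrium $(\bar x,\bar z)$, which is globally attractive: every trajectory converges to it. Here $\bar z>5/2$ is the unique fixed point on $[5/2,\infty)$ of the map $w\mapsto k_2(k_1(w))$, where $k_1(w)=5+\frac{1}{1+w^2}$ and $k_2(y)$ is the unique $z>5/2$ with $P(z)=y$ (for $y>5$), and $\bar x=k_1(\bar z)$. Moreover the set-valued map $k_2(y)=\{z\ge0:P(z)=y\}$, $y\ge0$, is single-valued for $y\in[0,4)\cup(5,\infty)$, triple-valued for $y\in(4,5)$, and $k_2(4)=\{1/2,2\}$, $k_2(5)=\{1,5/2\}$.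
   Context: This is the interconnection $\dot x=-x+5+w$, $y=x$; $\dot z=-P(z)+y$, $w=\frac{1}{1+z^2}$, written in closed form. *)

(* Defs.v *)
From Stdlib Require Import Reals.
From Coquelicot Require Import Coquelicot.
Open Scope R_scope.

Definition P (z : R) : R := z * (2 * z ^ 2 - 9 * z + 12).

Definition k1 (w : R) : R := 5 + / (1 + w ^ 2).

Definition fx (x z : R) : R := - x + 5 + / (1 + z ^ 2).
Definition fz (x z : R) : R := - P z + x.

Definition is_traj (x z : R -> R) : Prop :=
  forall t, 0 <= t ->
    is_derive x t (fx (x t) (z t)) /\ is_derive z t (fz (x t) (z t)).

Definition k2set (y z : R) : Prop := 0 <= z /\ P z = y.

(* for y > 5: k2(y) is the unique z > 5/2 with P z = y (relational form) *)
Definition k2rel (y z : R) : Prop := 5 / 2 < z /\ P z = y.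

(* Main.v *)
Require Import Defs.
From Stdlib Require Import Reals Lra Psatz Classical Lia.
From Coquelicot Require Import Coquelicot.
Open Scope R_scope.

Lemma cont_eps (g : R -> R) m : continuous g m ->
  forall eps, 0 < eps -> exists d, 0 < d /\ forall s, Rabs (s - m) < d -> Rabs (g s - g m) < eps.
Proof.
  intros Hc eps He.
  assert (H := proj1 (continuity_pt_locally g m) (proj2 (continuity_pt_filterlim g m) Hc) (mkposreal eps He)).
  destruct H as [d Hd]. exists d. split. apply cond_pos.
  intros s Hs. apply Hd. exact Hs.
Qed.

Lemma lip_cont (f : R -> R) K t : (forall s, Rabs (f s - f t) <= K * Rabs (s - t)) -> continuous f t.
Proof.
  intros H. apply continuity_pt_filterlim. apply continuity_pt_locally.
  intros eps. exists (mkposreal (eps / (Rabs K + 1)) ltac:(apply Rdiv_lt_0_compat; [apply cond_pos| pose proof (Rabs_pos K); lra])).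
  intros s Hs. change (Rabs (s - t) < eps / (Rabs K + 1)) in Hs.
  specialize (H s). pose proof (Rabs_pos K). pose proof (Rle_abs K). pose proof (cond_pos eps).
  pose proof (Rabs_pos (s - t)).
  apply Rle_lt_trans with (1 := H).
  apply Rle_lt_trans with (Rabs K * Rabs (s - t)). apply Rmult_le_compat_r; lra.
  apply Rle_lt_trans with ((Rabs K + 1) * Rabs (s-t)). nra.
  replace (pos eps) with ((Rabs K + 1) * (eps / (Rabs K + 1))) by (field; lra).
  apply Rmult_lt_compat_l; lra.
Qed.

Lemma exd_cont (g : R -> R) t : ex_derive g t -> continuous g t.
Proof. intros H. apply (ex_derive_continuous (K:=R_AbsRing) (V:=R_NormedModule)). exact H. Qed.

Lemma exd_contpt (g : R -> R) t : ex_derive g t -> continuity_pt g t.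
Proof. intros H. apply continuity_pt_filterlim. apply exd_cont. exact H. Qed.

Lemma barrier (g : R -> R) a b c : a <= b ->
  (forall t, a <= t <= b -> ex_derive g t) ->
  (forall t, a <= t <= b -> g t < c -> 0 <= Derive g t) ->
  c <= g a -> c <= g b.
Proof.
  intros Hab Hd Hsg Ha.
  destruct (Rle_lt_dec c (g b)) as [|Hb]; [assumption|exfalso].
  set (E := fun s => a <= s <= b /\ c <= g s).
  destruct (completeness E) as [m [Hub Hl]].
  { exists b. intros s [Hs1 _]. lra. }
  { exists a. split; [lra|assumption]. }
  assert (Ham : a <= m) by (apply Hub; split; [lra|assumption]).
  assert (Hmb : m <= b) by (apply Hl; intros s [Hs1 _]; lra).
  assert (Hgm : c <= g m).
  { destruct (Rle_lt_dec c (g m)) as [|Hlt]; [assumption|exfalso].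
    destruct (cont_eps g m (exd_cont _ _ (Hd m (conj Ham Hmb))) (c - g m)) as [d [Hd0 Hdd]]; [lra|].
    destruct (classic (exists s, E s /\ m - d/2 < s)) as [[s [Es Hs2]]|Hn].
    - assert (s <= m) by (apply Hub; exact Es).
      specialize (Hdd s ltac:(rewrite Rabs_left1; lra)).
      destruct Es as [_ Es]. apply Rabs_def2 in Hdd. lra.
    - assert (m <= m - d/2); [|lra]. apply Hl. intros s Es.
      destruct (Rle_lt_dec s (m - d/2)); [assumption|]. exfalso; apply Hn; exists s; auto. }
  assert (Hmb' : m < b) by (destruct (Req_dec m b); [subst; lra|lra]).
  assert (Hafter : forall s, m < s <= b -> g s < c).
  { intros s Hs. destruct (Rlt_le_dec (g s) c); [assumption|].
    assert (s <= m) by (apply Hub; split; [lra|assumption]). lra. }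
  destruct (MVT_gen g m b (fun x => Rmax 0 (Derive g x))) as [xi [Hxi Heq]].
  - intros x Hx. rewrite Rmin_left in Hx by lra. rewrite Rmax_right in Hx by lra.
    rewrite Rmax_right. apply Derive_correct, Hd; lra.
    apply Hsg; [lra|]. apply Hafter; lra.
  - intros x Hx. rewrite Rmin_left in Hx by lra. rewrite Rmax_right in Hx by lra.
    apply exd_contpt, Hd; lra.
  - assert (0 <= Rmax 0 (Derive g xi) * (b - m)).
    { apply Rmult_le_pos; [apply Rmax_l|lra]. }
    lra.
Qed.

Lemma reach (g : R -> R) a c eta : 0 < eta ->
  (forall t, a <= t -> ex_derive g t) ->
  (forall t, a <= t -> g t < c -> eta <= Derive g t) ->
  exists T, a <= T /\ forall t, T <= t -> c <= g t.
Proof.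
  intros He Hd Hs.
  destruct (classic (exists T, a <= T /\ c <= g T)) as [[T [HT1 HT2]]|Hn].
  - exists T. split; [assumption|]. intros t Ht.
    apply (barrier g T t c Ht); try assumption.
    + intros; apply Hd; lra.
    + intros s Hs1 Hs2. specialize (Hs s ltac:(lra) Hs2). lra.
  - exfalso.
    assert (Hlt : forall t, a <= t -> g t < c).
    { intros t Ht. destruct (Rlt_le_dec (g t) c); [assumption|]. exfalso; apply Hn; exists t; auto. }
    set (b := a + (c - g a) / eta + 1).
    assert (Hga := Hlt a (Rle_refl a)).
    assert (Hb : a < b) by (unfold b; assert (0 < (c - g a)/eta) by (apply Rdiv_lt_0_compat; lra); lra).
    destruct (MVT_gen g a b (fun x => Rmax eta (Derive g x))) as [xi [Hxi Heq]].
    + intros x Hx. rewrite Rmin_left in Hx by lra. rewrite Rmax_right in Hx by lra.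
      rewrite Rmax_right. apply Derive_correct, Hd; lra.
      apply Hs; [lra|]. apply Hlt; lra.
    + intros x Hx. rewrite Rmin_left in Hx by lra. rewrite Rmax_right in Hx by lra.
      apply exd_contpt, Hd; lra.
    + assert (eta * (b - a) <= Rmax eta (Derive g xi) * (b - a)).
      { apply Rmult_le_compat_r; [lra|apply Rmax_l]. }
      assert (eta * (b - a) = c - g a + eta) by (unfold b; field; lra).
      assert (Hgb := Hlt b ltac:(lra)). lra.
Qed.

Lemma barrier_is (g : R -> R) a b c : a <= b ->
  (forall t, a <= t <= b -> exists d, is_derive g t d /\ (g t < c -> 0 <= d)) ->
  c <= g a -> c <= g b.
Proof.
  intros Hab H Ha. apply (barrier g a b c Hab); auto.
  - intros t Ht. destruct (H t Ht) as [d [Hd _]]. exists d; exact Hd.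
  - intros t Ht Hl. destruct (H t Ht) as [d [Hd Hs]]. rewrite (is_derive_unique _ _ _ Hd). auto.
Qed.

Lemma reach_is (g : R -> R) a c eta : 0 < eta ->
  (forall t, a <= t -> exists d, is_derive g t d /\ (g t < c -> eta <= d)) ->
  exists T, a <= T /\ forall t, T <= t -> c <= g t.
Proof.
  intros He H. apply (reach g a c eta He).
  - intros t Ht. destruct (H t Ht) as [d [Hd _]]. exists d; exact Hd.
  - intros t Ht Hl. destruct (H t Ht) as [d [Hd Hs]]. rewrite (is_derive_unique _ _ _ Hd). auto.
Qed.

Lemma sq_der f t df c : is_derive f t df -> is_derive (fun s => (f s - c)^2) t (2*(f t - c)*df).
Proof. intros H.
  assert (H2 : is_derive (fun u => (u - c)^2) (f t) (2*(f t - c))).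
  { auto_derive; auto. ring. }
  pose proof (is_derive_comp _ _ t _ _ H2 H) as H3. simpl in H3.
  replace (2 * (f t - c) * df) with (scal df (2 * (f t - c))). exact H3.
  unfold scal; simpl; unfold mult; simpl. ring.
Qed.
Lemma opp_der f t df : is_derive f t df -> is_derive (fun s => - f s) t (- df).
Proof. intros H. apply (is_derive_opp f t df H). Qed.
Lemma plus_der f g t df dg : is_derive f t df -> is_derive g t dg -> is_derive (fun s => f s + g s) t (df + dg).
Proof. intros H1 H2. apply (is_derive_plus f g t df dg H1 H2). Qed.

Definition Qf a b := 2*(a^2+a*b+b^2) - 9*(a+b) + 12.
Lemma P_diff a b : P a - P b = (a - b) * Qf a b.
Proof. unfold P, Qf; ring. Qed.
Lemma P5 z : 5 - P z = (z-1)^2 * (5 - 2*z).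
Proof. unfold P; ring. Qed.
Lemma P4 z : P z - 4 = (z-2)^2 * (2*z - 1).
Proof. unfold P; ring. Qed.
Lemma Qdiff a b c : Qf a c - Qf b c = (a - b) * (2*(a+b+c) - 9).
Proof. unfold Qf; ring. Qed.

Lemma P_le5 z : z <= 5/2 -> P z <= 5.
Proof. intros H. pose proof (P5 z). assert (0 <= (z-1)^2) by (apply pow2_ge_0). nra. Qed.
Lemma P_ge4 z : 1/2 <= z -> 4 <= P z.
Proof. intros H. pose proof (P4 z). assert (0 <= (z-2)^2) by (apply pow2_ge_0). nra. Qed.
Lemma P_neg z : z < 0 -> P z < 0.
Proof. intros H. unfold P. assert (0 < 2*z^2 - 9*z + 12) by nra. nra. Qed.
Lemma P_ge3z z : 3 <= z -> 3 * z <= P z.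
Proof. intros H. unfold P. assert (0 <= (2*z-3)*(z-3)) by nra. assert (0 <= z * ((2*z-3)*(z-3))) by (apply Rmult_le_pos; lra). nra. Qed.

Lemma P_incr2 a b : 2 <= a -> a < b -> P a < P b.
Proof. intros Ha Hab. assert (0 < Qf a b) by (unfold Qf; nra).
  pose proof (P_diff b a). assert (Qf b a = Qf a b) by (unfold Qf; ring). nra. Qed.
Lemma P_incr01 a b : 0 <= a -> a < b -> b <= 1 -> P a < P b.
Proof. intros Ha Hab Hb. assert (0 < Qf a b) by (unfold Qf; nra).
  pose proof (P_diff b a). assert (Qf b a = Qf a b) by (unfold Qf; ring). nra. Qed.

Lemma P_cont : continuity P.
Proof. unfold P. reg. Qed.

Lemma inv_pos z : 0 < / (1 + z^2).
Proof. apply Rinv_0_lt_compat. pose proof (pow2_ge_0 z). lra. Qed.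
Lemma inv_le1 z : / (1 + z^2) <= 1.
Proof. pose proof (pow2_ge_0 z). rewrite <- Rinv_1. apply Rinv_le_contravar; lra. Qed.

Lemma k1_cont : continuity k1.
Proof. unfold k1. reg; intros x; pose proof (pow2_ge_0 x); lra. Qed.

Lemma k1_decr a b : 0 <= a -> a < b -> k1 b < k1 a.
Proof. intros Ha Hab. unfold k1.
  apply Rplus_lt_compat_l. apply Rinv_lt_contravar.
  pose proof (pow2_ge_0 a); pose proof (pow2_ge_0 b); nra. nra. Qed.

Lemma ivt P' a b y : continuity P' -> a <= b -> P' a <= y <= P' b -> exists z, a <= z <= b /\ P' z = y.
Proof. intros Hc Hab Hy.
  destruct (IVT_gen P' a b y Hc) as [z [Hz1 Hz2]].
  - rewrite Rmin_left by lra. rewrite Rmax_right by lra. exact Hy.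
  - exists z. rewrite Rmin_left, Rmax_right in Hz1 by lra. auto.
Qed.

Lemma k2rel_uniq y : 5 < y -> exists! z, k2rel y z.
Proof.
  intros Hy. destruct (ivt P (5/2) (Rmax 3 y) y P_cont ltac:(pose proof (Rmax_l 3 y); lra)
     ltac:(split; [unfold P; lra| pose proof (P_ge3z (Rmax 3 y) (Rmax_l 3 y)); pose proof (Rmax_r 3 y); lra])) as [z [Hz Pz]].
  { assert (Hz' : 5/2 < z). { destruct (Req_dec z (5/2)) as [Heq|]; [rewrite Heq in Pz; unfold P in Pz; lra|lra]. }
    exists z. split. split; auto.
    intros w [Hw Pw]. destruct (Rtotal_order z w) as [H|[H|H]]; auto.
    + pose proof (P_incr2 z w ltac:(lra) H). lra.
    + pose proof (P_incr2 w z ltac:(lra) H). lra. }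
Qed.

Lemma k2set_low y : 0 <= y < 4 -> exists! z, k2set y z.
Proof.
  intros Hy. destruct (ivt P 0 (1/2) y P_cont ltac:(lra) ltac:(unfold P; lra)) as [z [Hz Pz]].
  assert (Hz' : z < 1/2). { destruct (Req_dec z (1/2)) as [Heq|]; [rewrite Heq in Pz; unfold P in Pz; lra|lra]. }
  exists z. split. split; [lra|auto].
  intros w [Hw Pw]. assert (w < 1/2). { destruct (Rlt_le_dec w (1/2)); auto. pose proof (P_ge4 w r); lra. }
  destruct (Rtotal_order z w) as [H'|[H'|H']]; auto.
  + pose proof (P_incr01 z w ltac:(lra) H' ltac:(lra)). lra.
  + pose proof (P_incr01 w z ltac:(lra) H' ltac:(lra)). lra.
Qed.

Lemma k2set_high y : 5 < y -> exists! z, k2set y z.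
Proof.
  intros Hy. destruct (k2rel_uniq y Hy) as [z [[Hz Pz] Hu]].
  exists z. split. split; [lra|auto].
  intros w [Hw Pw]. apply Hu. split; auto.
  destruct (Rlt_le_dec (5/2) w); auto. pose proof (P_le5 w r); lra.
Qed.

Lemma root_cases z1 z2 z3 z y : z1 < z2 < z3 -> P z1 = y -> P z2 = y -> P z3 = y -> P z = y ->
  z = z1 \/ z = z2 \/ z = z3.
Proof.
  intros Ho H1 H2 H3 H.
  destruct (Req_dec z z1); auto. destruct (Req_dec z z2); auto. right; right.
  assert (Hq : forall a, a <> z1 -> P a = y -> Qf a z1 = 0).
  { intros a Ha Pa. pose proof (P_diff a z1). assert (Hm : (a - z1) * Qf a z1 = 0) by lra.
    apply Rmult_integral in Hm. destruct Hm; [lra|auto]. }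
  pose proof (Hq z H0 H). pose proof (Hq z2 ltac:(lra) H2). pose proof (Hq z3 ltac:(lra) H3).
  pose proof (Qdiff z z2 z1). pose proof (Qdiff z3 z2 z1).
  assert (E1 : 2*(z+z2+z1) - 9 = 0).
  { assert (Hm : (z - z2) * (2*(z+z2+z1) - 9) = 0) by lra. apply Rmult_integral in Hm. destruct Hm; [lra|auto]. }
  assert (E2 : 2*(z3+z2+z1) - 9 = 0).
  { assert (Hm : (z3 - z2) * (2*(z3+z2+z1) - 9) = 0) by lra. apply Rmult_integral in Hm. destruct Hm; [lra|auto]. }
  lra.
Qed.

Lemma k2set_mid y : 4 < y < 5 ->
     exists z1 z2 z3, z1 < z2 < z3 /\
       forall z, k2set y z <-> (z = z1 \/ z = z2 \/ z = z3).
Proof.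
  intros Hy.
  destruct (ivt P (1/2) 1 y P_cont ltac:(lra) ltac:(unfold P; lra)) as [z1 [Hz1 P1]].
  destruct (ivt (fun z => - P z) 1 2 (-y) (continuity_opp _ P_cont) ltac:(lra) ltac:(unfold P; lra)) as [z2 [Hz2 P2]].
  destruct (ivt P 2 (5/2) y P_cont ltac:(lra) ltac:(unfold P; lra)) as [z3 [Hz3 P3]].
  assert (z1 < 1) by (destruct (Req_dec z1 1) as [Heq|]; [rewrite Heq in P1; unfold P in P1; lra|lra]).
  assert (1 < z2) by (destruct (Req_dec z2 1) as [Heq|]; [rewrite Heq in P2; unfold P in P2; lra|lra]).
  assert (z2 < 2) by (destruct (Req_dec z2 2) as [Heq|]; [rewrite Heq in P2; unfold P in P2; lra|lra]).
  assert (2 < z3) by (destruct (Req_dec z3 2) as [Heq|]; [rewrite Heq in P3; unfold P in P3; lra|lra]).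
  exists z1, z2, z3. split. lra.
  intros z. split.
  - intros [Hz Pz]. apply (root_cases z1 z2 z3 z y); auto; lra.
  - intros [ -> | [ -> | -> ] ]; split; lra.
Qed.

Lemma k2set_4 z : k2set 4 z <-> (z = 1/2 \/ z = 2).
Proof. split.
  - intros [Hz Pz]. pose proof (P4 z). assert (Hm : (z-2)^2 * (2*z-1) = 0) by lra.
    apply Rmult_integral in Hm. destruct Hm as [Hm|Hm]. right. nra. left; lra.
  - intros [ -> | -> ]; split; try lra; unfold P; lra.
Qed.

Lemma k2set_5 z : k2set 5 z <-> (z = 1 \/ z = 5/2).
Proof. split.
  - intros [Hz Pz]. pose proof (P5 z). assert (Hm : (z-1)^2 * (5-2*z) = 0) by lra.
    apply Rmult_integral in Hm. destruct Hm as [Hm|Hm]. left. nra. right; lra.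
  - intros [ -> | -> ]; split; try lra; unfold P; lra.
Qed.

Lemma fixpt : exists zbar, 5/2 < zbar <= 3 /\ P zbar = k1 zbar /\
   forall w, 5/2 <= w -> P w = k1 w -> w = zbar.
Proof.
  destruct (ivt (fun w => P w - k1 w) (5/2) 3 0 (continuity_minus _ _ P_cont k1_cont) ltac:(lra)
   ltac:(unfold P, k1; split; [assert (/ (1 + (5/2)^2) > 0) by apply inv_pos; lra | pose proof (inv_le1 3); lra])) as [zb [Hz Pz]].
  { assert (Hzb : 5/2 < zb).
    { destruct (Req_dec zb (5/2)) as [Heq|]; [|lra]. rewrite Heq in Pz. unfold P, k1 in Pz.
      pose proof (inv_pos (5/2)). lra. }
    exists zb. split; [lra|]. split; [lra|].
    intros w Hw Pw. destruct (Rtotal_order w zb) as [H|[H|H]]; auto.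
    + pose proof (P_incr2 w zb ltac:(lra) H). pose proof (k1_decr w zb ltac:(lra) H). lra.
    + pose proof (P_incr2 zb w ltac:(lra) H). pose proof (k1_decr zb w ltac:(lra) H). lra. }
Qed.

Lemma lyap_ineq x z xbar zbar : 5/2 < zbar <= 3 -> xbar = 5 + /(1+zbar^2) -> P zbar = xbar -> 11/5 <= z ->
  2*(x - xbar)*fx x z + 2*(z - zbar)*fz x z <= - ((x-xbar)^2 + (z-zbar)^2).
Proof.
  intros Hzb Hxb Pzb Hz.
  set (A := /(1+z^2)). set (B := /(1+zbar^2)).
  assert (HA : A * (1+z^2) = 1) by (unfold A; field; pose proof (pow2_ge_0 z); lra).
  assert (HB : B * (1+zbar^2) = 1) by (unfold B; field; pose proof (pow2_ge_0 zbar); lra).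
  assert (HAp : 0 < A) by apply inv_pos. assert (HBp : 0 < B) by apply inv_pos.
  set (al := (z+zbar)*A*B).
  assert (Hdiff : A - B = - (z - zbar) * al).
  { unfold al. transitivity (A*(B*(1+zbar^2)) - (A*(1+z^2))*B). rewrite HA, HB; ring. ring. }
  assert (Hal0 : 0 <= al) by (unfold al; apply Rmult_le_pos; [apply Rmult_le_pos|]; lra).
  assert (Hal1 : al <= 1).
  { assert (Hp : al * ((1+z^2)*(1+zbar^2)) = z + zbar).
    { unfold al. transitivity ((z+zbar) * (A*(1+z^2)) * (B*(1+zbar^2))). ring. rewrite HA, HB; ring. }
    assert (z + zbar <= (1+z^2)*(1+zbar^2)) by nra.
    assert (0 < (1+z^2)*(1+zbar^2)) by (pose proof (pow2_ge_0 z); pose proof (pow2_ge_0 zbar); nra).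
    nra. }
  assert (HQ : 1 <= Qf z zbar) by (unfold Qf; nra).
  assert (Hfx : fx x z = - (x - xbar) - al * (z - zbar)).
  { unfold fx. fold A. rewrite Hxb. fold B. lra. }
  assert (Hfz : fz x z = - (z - zbar) * Qf z zbar + (x - xbar)).
  { unfold fz. pose proof (P_diff z zbar). lra. }
  rewrite Hfx, Hfz.
  set (u := x - xbar). set (v := z - zbar).
  assert (0 <= (u - (1-al)*v)^2) by apply pow2_ge_0.
  assert (0 <= v^2 * (2*Qf z zbar - 1 - (1-al)^2)).
  { apply Rmult_le_pos. apply pow2_ge_0. nra. }
  nra.
Qed.

Section Traj.
Variables (x z : R -> R).
Hypothesis (Hx0 : 0 <= x 0) (Hz0 : 0 <= z 0) (Ht : is_traj x z).

Lemma tx_nonneg t : 0 <= t -> 0 <= x t.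
Proof.
  intros H. apply (barrier_is x 0 t 0 H); auto.
  intros s Hs. exists (fx (x s) (z s)). split. apply (Ht s); lra.
  intros Hl. unfold fx. pose proof (inv_pos (z s)). lra.
Qed.

Lemma tz_nonneg t : 0 <= t -> 0 <= z t.
Proof.
  intros H. apply (barrier_is z 0 t 0 H); auto.
  intros s Hs. exists (fz (x s) (z s)). split. apply (Ht s); lra.
  intros Hl. unfold fz. pose proof (P_neg _ Hl). pose proof (tx_nonneg s ltac:(lra)). lra.
Qed.

Definition XB := Rmax (x 0) 6.
Definition ZB := z 0 + XB + 3.

Lemma tx_le t : 0 <= t -> x t <= XB.
Proof.
  intros H. assert (- XB <= - x t); [|lra].
  apply (barrier_is (fun s => - x s) 0 t (- XB) H).
  - intros s Hs. exists (- fx (x s) (z s)). split. apply opp_der, (Ht s); lra.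
    intros Hl. unfold fx. pose proof (inv_le1 (z s)). pose proof (Rmax_r (x 0) 6). unfold XB in Hl. lra.
  - pose proof (Rmax_l (x 0) 6). unfold XB. lra.
Qed.

Lemma tz_le t : 0 <= t -> z t <= ZB.
Proof.
  intros H. assert (- ZB <= - z t); [|lra].
  apply (barrier_is (fun s => - z s) 0 t (- ZB) H).
  - intros s Hs. exists (- fz (x s) (z s)). split. apply opp_der, (Ht s); lra.
    intros Hl. unfold fz. pose proof (tx_le s ltac:(lra)).
    pose proof (Rmax_r (x 0) 6). unfold ZB, XB in *.
    pose proof (P_ge3z (z s) ltac:(lra)). lra.
  - pose proof (Rmax_l (x 0) 6). unfold ZB, XB. lra.
Qed.

Variables (xbar zbar : R).
Hypothesis (Hzb : 5/2 < zbar <= 3) (Hxb : xbar = 5 + /(1+zbar^2)) (Pzb : P zbar = xbar).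

Lemma t_eventually : exists T, 0 <= T /\ forall t, T <= t -> 11/5 <= z t.
Proof.
  set (dl := /(1 + ZB^2)).
  assert (Hdl : 0 < dl) by apply inv_pos.
  destruct (reach_is x 0 (5 + dl/2) (dl/2)) as [T1 [HT1 H1]]. lra.
  { intros s Hs. exists (fx (x s) (z s)). split. apply (Ht s); lra.
    intros Hl. unfold fx.
    assert (dl <= /(1 + z s ^2)).
    { apply Rinv_le_contravar. pose proof (pow2_ge_0 (z s)); lra.
      pose proof (tz_nonneg s Hs). pose proof (tz_le s Hs). nra. }
    lra. }
  destruct (reach_is z T1 (11/5) (dl/2)) as [T2 [HT2 H2]]. lra.
  { intros s Hs. exists (fz (x s) (z s)). split. apply (Ht s); lra.
    intros Hl. unfold fz. pose proof (H1 s Hs). pose proof (P_le5 (z s) ltac:(lra)). lra. }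
  exists T2. split. lra. auto.
Qed.

Lemma t_conv : is_lim x p_infty xbar /\ is_lim z p_infty zbar.
Proof.
  destruct t_eventually as [T [HT0 HT]].
  set (V := fun s => (x s - xbar)^2 + (z s - zbar)^2).
  assert (HV : forall eps, 0 < eps -> exists T', forall t, T' <= t -> V t <= eps).
  { intros eps He.
    destruct (reach_is (fun s => - V s) T (- eps) eps He) as [T' [HT' H']].
    { intros s Hs. exists (- (2*(x s - xbar)*fx (x s) (z s) + 2*(z s - zbar)*fz (x s) (z s))).
      split. apply opp_der. apply plus_der; apply sq_der; apply (Ht s); lra.
      intros Hl. pose proof (lyap_ineq (x s) (z s) xbar zbar Hzb Hxb Pzb (HT s Hs)). unfold V in Hl. lra. }
    exists T'. intros t Htt. specialize (H' t Htt). lra. }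
  assert (Hsq : forall a eps, 0 < eps -> a^2 + 0 <= eps^2/2 -> Rabs a < eps).
  { intros a eps He Ha. destruct (Rlt_le_dec (Rabs a) eps) as [|Hge]; auto.
    exfalso. assert (eps^2 <= (Rabs a)^2) by nra. rewrite pow2_abs in H. nra. }
  split; apply is_lim_spec; intros eps; simpl;
  destruct (HV (eps^2/2) ltac:(pose proof (cond_pos eps); nra)) as [T' HT'];
  exists T'; intros t Htt; specialize (HT' t ltac:(lra)); unfold V in HT';
  apply Hsq; try apply cond_pos.
  - pose proof (pow2_ge_0 (z t - zbar)). lra.
  - pose proof (pow2_ge_0 (x t - xbar)). lra.
Qed.

End Traj.

Definition Cont (g : R -> R) := forall t, continuous g t.

Lemma Cont_exRInt g a b : Cont g -> ex_RInt g a b.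
Proof. intros H. apply (ex_RInt_continuous (V:=R_CompleteNormedModule)). intros; apply H. Qed.

Lemma Cont_lip g K : (forall u v, Rabs (g u - g v) <= K * Rabs (u - v)) -> Cont g.
Proof. intros H t. apply (lip_cont g K t). intros s. apply H. Qed.

Lemma RInt_chasles_R g a b c : Cont g -> RInt g a b + RInt g b c = RInt g a c.
Proof. intros H. rewrite <- (RInt_Chasles g a b c); try apply Cont_exRInt; auto. Qed.

Lemma RInt_sub_R g1 g2 a b : Cont g1 -> Cont g2 ->
  RInt (fun s => g1 s - g2 s) a b = RInt g1 a b - RInt g2 a b.
Proof. intros H1 H2. apply (RInt_minus g1 g2 a b); apply Cont_exRInt; auto. Qed.

Lemma RInt_const_R c a b : RInt (fun _ => c) a b = (b - a) * c.
Proof. rewrite RInt_const. reflexivity. Qed.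

Lemma RInt_point_R g a : RInt g a a = 0.
Proof. rewrite RInt_point. reflexivity. Qed.

Lemma int_bound h w t : 0 <= t -> Cont h -> Cont w ->
  (forall s, 0 <= s <= t -> Rabs (h s) <= w s) -> Rabs (RInt h 0 t) <= RInt w 0 t.
Proof.
  intros Ht Hh Hw Hb. apply Rabs_le. split.
  - assert (E : RInt (fun s => - w s) 0 t = - RInt w 0 t).
    { apply (RInt_opp w 0 t). apply Cont_exRInt; auto. }
    rewrite <- E. apply RInt_le; auto.
    + apply (ex_RInt_continuous (V:=R_CompleteNormedModule)). intros z _. apply (continuous_opp w z). apply Hw.
    + apply Cont_exRInt; auto.
    + intros s Hs. specialize (Hb s ltac:(lra)). apply Rabs_le_between in Hb. lra.
  - apply RInt_le; auto; try apply Cont_exRInt; auto.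
    intros s Hs. specialize (Hb s ltac:(lra)). apply Rabs_le_between in Hb. lra.
Qed.

Lemma int_lip g K a b : Cont g -> (forall u, Rabs (g u) <= K) ->
  Rabs (RInt g 0 b - RInt g 0 a) <= K * Rabs (b - a).
Proof.
  intros Hc Hb. rewrite <- (RInt_chasles_R g 0 a b Hc).
  assert (Hpq : forall p q : R, p + q - p = q) by (intros; ring). rewrite Hpq.
  destruct (Rle_lt_dec a b).
  - rewrite (Rabs_right (b - a)) by lra. rewrite Rmult_comm. apply abs_RInt_le_const; auto. apply Cont_exRInt; auto.
  - rewrite <- (opp_RInt_swap g b a) by (apply Cont_exRInt; auto).
    change (Rabs (- RInt g b a) <= K * Rabs (b - a)). rewrite Rabs_Ropp.
    rewrite (Rabs_left (b - a)) by lra. replace (- (b - a)) with (a - b) by ring. rewrite Rmult_comm.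
    apply abs_RInt_le_const; auto. lra. apply Cont_exRInt; auto.
Qed.

Lemma Cont_exp c : Cont (fun s => exp (c * s)).
Proof. intros t. apply exd_cont. auto_derive. auto. Qed.

Lemma RInt_exp c t : 0 < c -> RInt (fun s => exp (c * s)) 0 t = (exp (c * t) - 1) / c.
Proof.
  intros Hc. apply is_RInt_unique.
  replace ((exp (c * t) - 1) / c) with (minus (exp (c*t) / c) (exp (c*0)/c)).
  - apply (is_RInt_derive (fun s => exp (c*s) / c) (fun s => exp (c * s))).
    + intros x _. auto_derive; auto. field. lra.
    + intros x _. apply Cont_exp.
  - unfold minus, plus, opp; simpl. rewrite Rmult_0_r, exp_0. field. lra.
Qed.

Lemma small_zero a C : (forall n, Rabs a <= C * (/2)^n) -> a = 0.
Proof.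
  intros H. destruct (Req_dec a 0) as [|Hn]; auto. exfalso.
  assert (HC : 0 < C). { specialize (H O). simpl in H. pose proof (Rabs_pos_lt a Hn). lra. }
  destruct (pow_lt_1_zero (/2) ltac:(rewrite Rabs_right; lra) (Rabs a / C)) as [N HN].
  { apply Rdiv_lt_0_compat; auto. apply Rabs_pos_lt; auto. }
  specialize (HN N (Nat.le_refl N)). specialize (H N).
  rewrite Rabs_right in HN by (apply Rle_ge, pow_le; lra).
  assert (C * (/2)^N < Rabs a). { apply Rmult_lt_compat_l with (r := C) in HN; auto.
    replace (C * (Rabs a / C)) with (Rabs a) in HN by (field; lra). exact HN. }
  lra.
Qed.

Lemma geo_limit (u : nat -> R) C : 0 <= C -> (forall n, Rabs (u (S n) - u n) <= C * (/2)^n) ->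
  forall n, Rabs (u n - real (Lim_seq u)) <= 2 * C * (/2)^n.
Proof.
  intros HC H.
  assert (Hmn : forall n k, Rabs (u (k + n)%nat - u n) <= 2 * C * ((/2)^n - (/2)^(k+n))).
  { intros n k. induction k.
    - simpl. unfold Rminus. rewrite Rplus_opp_r, Rabs_R0. lra.
    - replace (S k + n)%nat with (S (k + n)) by lia.
      apply Rle_trans with (Rabs (u (S (k+n)) - u (k+n)%nat) + Rabs (u (k+n)%nat - u n)).
      { replace (u (S (k+n)) - u n) with ((u (S (k+n)) - u (k+n)%nat) + (u (k+n)%nat - u n)) by ring.
        apply Rabs_triang. }
      specialize (H (k+n)%nat). simpl. lra. }
  assert (Hb : forall n m, (n <= m)%nat -> Rabs (u m - u n) <= 2 * C * (/2)^n).
  { intros n m Hnm. replace m with ((m - n) + n)%nat by lia.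
    eapply Rle_trans. apply Hmn. assert (0 <= (/2)^(m-n+n)) by (apply pow_le; lra). nra. }
  assert (Hex : ex_finite_lim_seq u).
  { apply ex_lim_seq_cauchy_corr. intros eps.
    assert (HC1 : 0 < 2 * C + 1) by lra.
    destruct (pow_lt_1_zero (/2) ltac:(rewrite Rabs_right; lra) (eps / (2 * C + 1))) as [N HN].
    { apply Rdiv_lt_0_compat; auto. apply cond_pos. }
    exists N. intros n m Hn Hm.
    assert (Hp : forall k, (N <= k)%nat -> 2 * C * (/2)^k < eps).
    { intros k Hk. specialize (HN k Hk). rewrite Rabs_right in HN by (apply Rle_ge, pow_le; lra).
      assert (0 <= (/2)^k) by (apply pow_le; lra).
      apply Rle_lt_trans with ((2*C+1) * (/2)^k). nra.
      apply Rmult_lt_compat_l with (r := 2*C+1) in HN; auto.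
      replace ((2 * C + 1) * (eps / (2 * C + 1))) with (pos eps) in HN by (field; lra). exact HN. }
    destruct (Compare_dec.le_dec n m).
    - rewrite Rabs_minus_sym. eapply Rle_lt_trans. apply Hb; auto. apply Hp; auto.
    - eapply Rle_lt_trans. apply Hb; lia. apply Hp; auto. }
  destruct Hex as [l Hl].
  assert (Hlim : Lim_seq u = l) by (apply is_lim_seq_unique; auto).
  rewrite Hlim. simpl. intros n.
  assert (Hl' := proj1 (is_lim_seq_incr_n u n l) Hl).
  assert (H1 : Rbar_le (u n - 2 * C * (/2)^n) l).
  { apply (is_lim_seq_le (fun _ => u n - 2 * C * (/2)^n) (fun k => u (k + n)%nat) _ _).
    intros k. specialize (Hb n (k+n)%nat ltac:(lia)). apply Rabs_le_between in Hb. lra.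
    apply is_lim_seq_const. auto. }
  assert (H2 : Rbar_le l (u n + 2 * C * (/2)^n)).
  { apply (is_lim_seq_le (fun k => u (k + n)%nat) (fun _ => u n + 2 * C * (/2)^n) _ _).
    intros k. specialize (Hb n (k+n)%nat ltac:(lia)). apply Rabs_le_between in Hb. lra.
    auto. apply is_lim_seq_const. }
  simpl in H1, H2. apply Rabs_le. split; lra.
Qed.

Lemma RInt_cexp k c t : 0 < c -> RInt (fun s => k * exp (c * s)) 0 t = k * (exp (c * t) - 1) / c.
Proof.
  intros Hc. apply is_RInt_unique.
  replace (k * (exp (c * t) - 1) / c) with (minus (k * exp (c*t) / c) (k * exp (c*0)/c)).
  - apply (is_RInt_derive (fun s => k * exp (c*s) / c) (fun s => k * exp (c * s))).
    + intros x _. auto_derive; auto. field. lra.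
    + intros x _. apply exd_cont. auto_derive. auto.
  - unfold minus, plus, opp; simpl. rewrite Rmult_0_r, exp_0. field. lra.
Qed.

Lemma Cont_cexp k c : Cont (fun s => k * exp (c * s)).
Proof. intros t. apply exd_cont. auto_derive. auto. Qed.

Lemma Cont_const k : Cont (fun _ => k).
Proof. intros t. apply exd_cont. auto_derive. auto. Qed.

Lemma Cont_minus f g : Cont f -> Cont g -> Cont (fun s => f s - g s).
Proof. intros Hf Hg t. apply (continuous_minus f g t); auto. Qed.

Lemma small_le a b C : 0 <= C -> (forall n, a <= b + C * (/2)^n) -> a <= b.
Proof.
  intros HC H. assert (Rmax 0 (a - b) = 0).
  { apply (small_zero _ C). intros n. specialize (H n).
    assert (0 <= (/2)^n) by (apply pow_le; lra).
    assert (0 <= C * (/2)^n) by (apply Rmult_le_pos; lra).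
    unfold Rmax. destruct (Rle_dec 0 (a - b)); rewrite Rabs_right; lra. }
  pose proof (Rmax_r 0 (a - b)). lra.
Qed.

Lemma exp_mono a b : a <= b -> exp a <= exp b.
Proof. intros H. destruct (Req_dec a b). subst; lra. left. apply exp_increasing. lra. Qed.

Definition clamp lo hi v := Rmax lo (Rmin hi v).

Lemma clamp_range lo hi v : lo <= hi -> lo <= clamp lo hi v <= hi.
Proof. intros H. unfold clamp, Rmax, Rmin. repeat destruct Rle_dec; lra. Qed.
Lemma clamp_lip lo hi v w : lo <= hi -> Rabs (clamp lo hi v - clamp lo hi w) <= Rabs (v - w).
Proof. intros H. unfold clamp, Rmax, Rmin. repeat destruct Rle_dec; split_Rabs; lra. Qed.
Lemma clamp_id lo hi v : lo <= v <= hi -> clamp lo hi v = v.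
Proof. intros H. unfold clamp, Rmax, Rmin. repeat destruct Rle_dec; lra. Qed.
Lemma clamp_lo lo hi v : lo <= hi -> v < lo -> clamp lo hi v = lo.
Proof. intros H H'. unfold clamp, Rmax, Rmin. repeat destruct Rle_dec; lra. Qed.
Lemma clamp_hi lo hi v : lo <= hi -> hi < v -> clamp lo hi v = hi.
Proof. intros H H'. unfold clamp, Rmax, Rmin. repeat destruct Rle_dec; lra. Qed.
Lemma rmax0_lip u v : Rabs (Rmax 0 u - Rmax 0 v) <= Rabs (u - v).
Proof. unfold Rmax. repeat destruct Rle_dec; split_Rabs; lra. Qed.

Lemma inv_lip u w : 0 <= u -> 0 <= w -> Rabs (/(1+u^2) - /(1+w^2)) <= Rabs (u - w).
Proof.
  intros Hu Hw. set (A := /(1+u^2)). set (B := /(1+w^2)).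
  assert (HA : A * (1+u^2) = 1) by (unfold A; field; pose proof (pow2_ge_0 u); lra).
  assert (HB : B * (1+w^2) = 1) by (unfold B; field; pose proof (pow2_ge_0 w); lra).
  assert (HAp : 0 < A) by apply inv_pos. assert (HBp : 0 < B) by apply inv_pos.
  set (al := (u+w)*A*B).
  assert (Hdiff : A - B = - (u - w) * al).
  { unfold al. transitivity (A*(B*(1+w^2)) - (A*(1+u^2))*B). rewrite HA, HB; ring. ring. }
  assert (Hal0 : 0 <= al) by (unfold al; apply Rmult_le_pos; [apply Rmult_le_pos|]; lra).
  assert (Hal1 : al <= 1).
  { assert (Hp : al * ((1+u^2)*(1+w^2)) = u + w).
    { unfold al. transitivity ((u+w) * (A*(1+u^2)) * (B*(1+w^2))). ring. rewrite HA, HB; ring. }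
    assert (u + w <= (1+u^2)*(1+w^2)) by (pose proof (pow2_ge_0 (u - 1/2)); pose proof (pow2_ge_0 (w-1/2)); pose proof (pow2_ge_0 (u*w)); nra).
    assert (0 < (1+u^2)*(1+w^2)) by (pose proof (pow2_ge_0 u); pose proof (pow2_ge_0 w); nra).
    nra. }
  rewrite Hdiff. rewrite Rabs_mult, Rabs_Ropp, (Rabs_right al) by lra.
  pose proof (Rabs_pos (u - w)). nra.
Qed.

Section Picard.
Variables x0 z0 : R.
Hypothesis (Hx0 : 0 <= x0) (Hz0 : 0 <= z0).

Definition XX := Rmax x0 6.
Definition ZZ := z0 + XX + 3.
Lemma XX6 : 6 <= XX. Proof. apply Rmax_r. Qed.
Lemma XXx : x0 <= XX. Proof. apply Rmax_l. Qed.
Lemma ZZX : XX + 3 <= ZZ. Proof. unfold ZZ; lra. Qed.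

Definition cx v := clamp 0 XX v.
Definition cz v := clamp 0 ZZ v.
Definition Fx a b := - cx a + 5 + /(1 + (cz b)^2).
Definition Fz a b := - P (cz b) + cx a.
Definition LL := 2 + (6*ZZ^2 + 18*ZZ + 12).
Definition MM := 2*XX + 6 + ZZ*(2*ZZ^2+9*ZZ+12).

Lemma cx_range v : 0 <= cx v <= XX. Proof. apply clamp_range. pose proof XX6; lra. Qed.
Lemma cz_range v : 0 <= cz v <= ZZ. Proof. apply clamp_range. pose proof XX6; unfold ZZ; lra. Qed.
Lemma cx_lip v w : Rabs (cx v - cx w) <= Rabs (v - w). Proof. apply clamp_lip. pose proof XX6; lra. Qed.
Lemma cz_lip v w : Rabs (cz v - cz w) <= Rabs (v - w). Proof. apply clamp_lip. pose proof XX6; unfold ZZ; lra. Qed.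
Lemma LL1 : 2 <= LL. Proof. unfold LL. pose proof XX6. pose proof ZZX. nra. Qed.
Lemma MM0 : 0 <= MM. Proof. unfold MM. pose proof XX6. pose proof ZZX. nra. Qed.

Lemma Fx_lip a b a' b' : Rabs (Fx a b - Fx a' b') <= LL * (Rabs (a - a') + Rabs (b - b')).
Proof.
  unfold Fx. pose proof (cx_lip a a'). pose proof (cz_lip b b').
  pose proof (cz_range b). pose proof (cz_range b').
  pose proof (inv_lip (cz b) (cz b') ltac:(lra) ltac:(lra)).
  replace (- cx a + 5 + / (1 + cz b ^ 2) - (- cx a' + 5 + / (1 + cz b' ^ 2)))
    with (- (cx a - cx a') + (/ (1 + cz b ^ 2) - / (1 + cz b' ^ 2))) by ring.
  eapply Rle_trans. apply Rabs_triang. rewrite Rabs_Ropp.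
  pose proof LL1. pose proof (Rabs_pos (a - a')). pose proof (Rabs_pos (b - b')). nra.
Qed.

Lemma Qf_bound u w : 0 <= u <= ZZ -> 0 <= w <= ZZ -> Rabs (Qf u w) <= 6*ZZ^2 + 18*ZZ + 12.
Proof. intros Hu Hw. unfold Qf. apply Rabs_le. split; nra. Qed.

Lemma Fz_lip a b a' b' : Rabs (Fz a b - Fz a' b') <= LL * (Rabs (a - a') + Rabs (b - b')).
Proof.
  unfold Fz. pose proof (cx_lip a a'). pose proof (cz_lip b b').
  pose proof (cz_range b). pose proof (cz_range b').
  pose proof (Qf_bound (cz b) (cz b') H1 H2).
  replace (- P (cz b) + cx a - (- P (cz b') + cx a')) with (- ((cz b - cz b') * Qf (cz b) (cz b')) + (cx a - cx a'))
    by (rewrite <- P_diff; ring).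
  eapply Rle_trans. apply Rabs_triang. rewrite Rabs_Ropp, Rabs_mult.
  pose proof (Rabs_pos (a - a')). pose proof (Rabs_pos (b - b')).
  pose proof (Rabs_pos (cz b - cz b')). pose proof (Rabs_pos (Qf (cz b) (cz b'))).
  assert (Rabs (cz b - cz b') * Rabs (Qf (cz b) (cz b')) <= Rabs (b - b') * (6*ZZ^2 + 18*ZZ + 12)).
  { apply Rmult_le_compat; auto. }
  set (c := 6*ZZ^2 + 18*ZZ + 12) in *.
  assert (0 <= c) by (unfold c; pose proof ZZX; pose proof XX6; nra).
  assert (0 <= c * Rabs (a - a')) by (apply Rmult_le_pos; lra).
  unfold LL. fold c. replace ((2 + c) * (Rabs (a - a') + Rabs (b - b'))) with
    (2 * Rabs (a - a') + 2 * Rabs (b - b') + c * Rabs (a - a') + Rabs (b - b') * c) by ring.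
  lra.
Qed.

Lemma Fx_bound a b : Rabs (Fx a b) <= MM.
Proof. unfold Fx, MM. pose proof (cx_range a). pose proof (inv_pos (cz b)). pose proof (inv_le1 (cz b)).
  pose proof XX6. pose proof ZZX. assert (0 <= ZZ*(2*ZZ^2+9*ZZ+12)) by nra.
  apply Rabs_le; split; lra. Qed.

Lemma Fz_bound a b : Rabs (Fz a b) <= MM.
Proof. unfold Fz, MM. pose proof (cx_range a). pose proof (cz_range b).
  pose proof XX6. pose proof ZZX. set (c := cz b) in *.
  assert (0 <= P c <= ZZ*(2*ZZ^2+9*ZZ+12)).
  { unfold P. assert (0 < 2*c^2 - 9*c + 12) by (pose proof (pow2_ge_0 (c - 9/4)); nra). split. apply Rmult_le_pos; lra.
    assert (2*c^2 - 9*c + 12 <= 2*ZZ^2+9*ZZ+12) by nra. apply Rmult_le_compat; lra. }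
  apply Rabs_le; split; lra. Qed.

Definition Gx (f : R -> R * R) s := Fx (fst (f (Rmax 0 s))) (snd (f (Rmax 0 s))).
Definition Gz (f : R -> R * R) s := Fz (fst (f (Rmax 0 s))) (snd (f (Rmax 0 s))).

Definition lipM (f : R -> R * R) := forall t s, 0 <= t -> 0 <= s ->
  Rabs (fst (f t) - fst (f s)) <= MM * Rabs (t - s) /\ Rabs (snd (f t) - snd (f s)) <= MM * Rabs (t - s).

Lemma G_lip f : lipM f -> forall u v,
  Rabs (Gx f u - Gx f v) <= (LL * (2*MM)) * Rabs (u - v) /\
  Rabs (Gz f u - Gz f v) <= (LL * (2*MM)) * Rabs (u - v).
Proof.
  intros Hf u v. destruct (Hf (Rmax 0 u) (Rmax 0 v) (Rmax_l _ _) (Rmax_l _ _)) as [H1 H2].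
  pose proof (rmax0_lip u v). pose proof MM0. pose proof LL1.
  assert (Hs : Rabs (fst (f (Rmax 0 u)) - fst (f (Rmax 0 v))) + Rabs (snd (f (Rmax 0 u)) - snd (f (Rmax 0 v)))
      <= 2*MM * Rabs (u - v)) by nra.
  unfold Gx, Gz. split.
  - eapply Rle_trans. apply Fx_lip. nra.
  - eapply Rle_trans. apply Fz_lip. nra.
Qed.

Lemma G_cont f : lipM f -> Cont (Gx f) /\ Cont (Gz f).
Proof. intros Hf. split; apply (Cont_lip _ (LL * (2*MM))); intros; apply (G_lip f Hf). Qed.

Fixpoint pic (n : nat) : R -> R * R :=
  match n with
  | O => fun _ => (x0, z0)
  | S n => fun t => (x0 + RInt (Gx (pic n)) 0 t, z0 + RInt (Gz (pic n)) 0 t)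
  end.

Lemma pic_lip n : lipM (pic n).
Proof.
  induction n.
  - intros t s _ _. simpl. unfold Rminus. rewrite !Rplus_opp_r, !Rabs_R0.
    pose proof MM0. pose proof (Rabs_pos (t + - s)). split; nra.
  - destruct (G_cont _ IHn) as [Cx Cz].
    intros t s _ _. simpl.
    replace (x0 + RInt (Gx (pic n)) 0 t - (x0 + RInt (Gx (pic n)) 0 s)) with (RInt (Gx (pic n)) 0 t - RInt (Gx (pic n)) 0 s) by ring.
    replace (z0 + RInt (Gz (pic n)) 0 t - (z0 + RInt (Gz (pic n)) 0 s)) with (RInt (Gz (pic n)) 0 t - RInt (Gz (pic n)) 0 s) by ring.
    split; apply int_lip; auto; intros; [apply Fx_bound|apply Fz_bound].
Qed.

Definition EE t := exp (4*LL*t).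
Definition KK := 2*MM.
Definition dn n t := Rabs (fst (pic (S n) t) - fst (pic n t)) + Rabs (snd (pic (S n) t) - snd (pic n t)).

Lemma EE_ge t : 0 <= t -> t <= EE t.
Proof. intros H. unfold EE. pose proof (exp_ineq1_le (4*LL*t)). pose proof LL1. nra. Qed.
Lemma EE_pos t : 0 < EE t. Proof. apply exp_pos. Qed.
Lemma EE_mono s t : s <= t -> EE s <= EE t.
Proof. intros H. unfold EE. apply exp_mono. pose proof LL1. nra. Qed.

Lemma pic_cont n : Cont (Gx (pic n)) /\ Cont (Gz (pic n)).
Proof. apply G_cont, pic_lip. Qed.

Lemma pic_contr n : forall t, 0 <= t -> dn n t <= KK * (/2)^n * EE t.
Proof.
  induction n; intros t Ht.
  - unfold dn. simpl.
    destruct (pic_cont 0) as [Cx Cz].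
    pose proof (int_lip _ MM 0 t Cx (fun u => Fx_bound _ _)) as H1.
    pose proof (int_lip _ MM 0 t Cz (fun u => Fz_bound _ _)) as H2.
    rewrite RInt_point_R in H1, H2. simpl in H1, H2.
    replace (x0 + RInt (Gx (fun _ : R => (x0, z0))) 0 t - x0) with (RInt (Gx (fun _ : R => (x0, z0))) 0 t - 0) by ring.
    replace (z0 + RInt (Gz (fun _ : R => (x0, z0))) 0 t - z0) with (RInt (Gz (fun _ : R => (x0, z0))) 0 t - 0) by ring.
    assert (Ht0 : Rabs (t - 0) = t) by (rewrite Rminus_0_r; apply Rabs_right; lra). rewrite Ht0 in H1, H2.
    pose proof (EE_ge t Ht). pose proof MM0. unfold KK. nra.
  - destruct (pic_cont (S n)) as [Cx1 Cz1]. destruct (pic_cont n) as [Cx0 Cz0].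
    set (w := fun s => (LL * KK * (/2)^n) * exp ((4*LL) * s)).
    assert (Cw : Cont w) by apply Cont_cexp.
    assert (Hw : RInt w 0 t = LL * KK * (/2)^n * (EE t - 1) / (4*LL)).
    { unfold w. rewrite RInt_cexp. reflexivity. pose proof LL1; lra. }
    assert (Hpt : forall s, 0 <= s <= t ->
       Rabs (Gx (pic (S n)) s - Gx (pic n) s) <= w s /\ Rabs (Gz (pic (S n)) s - Gz (pic n) s) <= w s).
    { intros s Hs. unfold Gx, Gz. rewrite Rmax_right by lra.
      specialize (IHn s ltac:(lra)). unfold dn in IHn. pose proof LL1.
      assert (LL * (Rabs (fst (pic (S n) s) - fst (pic n s)) + Rabs (snd (pic (S n) s) - snd (pic n s))) <= w s).
      { unfold w. fold (EE s). replace (LL * KK * (/ 2) ^ n * EE s) with (LL * (KK * (/ 2) ^ n * EE s)) by ring.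
        apply Rmult_le_compat_l; lra. }
      split; (eapply Rle_trans; [first [apply Fx_lip|apply Fz_lip]|]); lra. }
    assert (B1 : Rabs (fst (pic (S (S n)) t) - fst (pic (S n) t)) <= RInt w 0 t).
    { change (fst (pic (S (S n)) t)) with (x0 + RInt (Gx (pic (S n))) 0 t).
      change (fst (pic (S n) t)) with (x0 + RInt (Gx (pic n)) 0 t).
      replace (x0 + RInt (Gx (pic (S n))) 0 t - (x0 + RInt (Gx (pic n)) 0 t))
        with (RInt (Gx (pic (S n))) 0 t - RInt (Gx (pic n)) 0 t) by ring.
      rewrite <- RInt_sub_R by auto. apply int_bound; auto. apply Cont_minus; auto.
      intros s Hs; apply Hpt; auto. }
    assert (B2 : Rabs (snd (pic (S (S n)) t) - snd (pic (S n) t)) <= RInt w 0 t).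
    { change (snd (pic (S (S n)) t)) with (z0 + RInt (Gz (pic (S n))) 0 t).
      change (snd (pic (S n) t)) with (z0 + RInt (Gz (pic n)) 0 t).
      replace (z0 + RInt (Gz (pic (S n))) 0 t - (z0 + RInt (Gz (pic n)) 0 t))
        with (RInt (Gz (pic (S n))) 0 t - RInt (Gz (pic n)) 0 t) by ring.
      rewrite <- RInt_sub_R by auto. apply int_bound; auto. apply Cont_minus; auto.
      intros s Hs; apply Hpt; auto. }
    unfold dn. rewrite Hw in B1, B2. pose proof LL1. pose proof (EE_pos t).
    assert (0 <= KK * (/2)^n) by (unfold KK; pose proof MM0; apply Rmult_le_pos; [lra|apply pow_le; lra]).
    replace (LL * KK * (/ 2) ^ n * (EE t - 1) / (4 * LL)) with (KK * (/ 2) ^ n * (EE t - 1) / 4) in B1, B2 by (field; lra).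
    replace (KK * (/2)^(S n) * EE t) with ((KK * (/2)^n) * EE t / 2) by (simpl; field).
    set (q := KK * (/2)^n) in *.
    replace (KK * (/ 2) ^ n * (EE t - 1) / 4) with (q * EE t / 4 - q / 4) in B1, B2 by (unfold q; field).
    lra.
Qed.

Definition xs t := real (Lim_seq (fun n => fst (pic n t))).
Definition zs t := real (Lim_seq (fun n => snd (pic n t))).
Definition sol t := (xs t, zs t).

Lemma xs_tail t n : 0 <= t -> Rabs (fst (pic n t) - xs t) <= 2 * (KK * EE t) * (/2)^n.
Proof.
  intros Ht. apply (geo_limit (fun n => fst (pic n t))).
  - unfold KK; pose proof MM0; pose proof (EE_pos t). apply Rmult_le_pos; lra.
  - intros k. pose proof (pic_contr k t Ht). unfold dn in H.
    pose proof (Rabs_pos (snd (pic (S k) t) - snd (pic k t))).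
    replace (KK * EE t * (/2)^k) with (KK * (/2)^k * EE t) by ring. lra.
Qed.
Lemma zs_tail t n : 0 <= t -> Rabs (snd (pic n t) - zs t) <= 2 * (KK * EE t) * (/2)^n.
Proof.
  intros Ht. apply (geo_limit (fun n => snd (pic n t))).
  - unfold KK; pose proof MM0; pose proof (EE_pos t). apply Rmult_le_pos; lra.
  - intros k. pose proof (pic_contr k t Ht). unfold dn in H.
    pose proof (Rabs_pos (fst (pic (S k) t) - fst (pic k t))).
    replace (KK * EE t * (/2)^k) with (KK * (/2)^k * EE t) by ring. lra.
Qed.

Lemma lim_lip (u : nat -> R -> R) (l : R -> R) t s :
  (forall n, Rabs (u n t - u n s) <= MM * Rabs (t - s)) ->
  (forall n, Rabs (u n t - l t) <= 2 * (KK * EE t) * (/2)^n) ->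
  (forall n, Rabs (u n s - l s) <= 2 * (KK * EE s) * (/2)^n) ->
  Rabs (l t - l s) <= MM * Rabs (t - s).
Proof.
  intros H0 H1 H2. apply (small_le _ _ (2 * (KK * EE t) + 2 * (KK * EE s))).
  { unfold KK; pose proof MM0; pose proof (EE_pos t); pose proof (EE_pos s). nra. }
  intros n. specialize (H0 n). specialize (H1 n). specialize (H2 n).
  replace (l t - l s) with (- (u n t - l t) + (u n t - u n s) + (u n s - l s)) by ring.
  eapply Rle_trans. apply Rabs_triang. eapply Rle_trans. apply Rplus_le_compat_r. apply Rabs_triang.
  rewrite Rabs_Ropp. lra.
Qed.

Lemma sol_lip : lipM sol.
Proof.
  intros t s Ht Hs. unfold sol; simpl. split.
  - apply (lim_lip (fun n r => fst (pic n r)) xs t s).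
    + intros n. apply (pic_lip n t s Ht Hs).
    + intros n; apply xs_tail; auto.
    + intros n; apply xs_tail; auto.
  - apply (lim_lip (fun n r => snd (pic n r)) zs t s).
    + intros n. apply (pic_lip n t s Ht Hs).
    + intros n; apply zs_tail; auto.
    + intros n; apply zs_tail; auto.
Qed.

Lemma sol_cont : Cont (Gx sol) /\ Cont (Gz sol).
Proof. apply G_cont, sol_lip. Qed.

Lemma G_close n s t : 0 <= s <= t ->
  Rabs (Gx (pic n) s - Gx sol s) <= LL * (4 * KK * EE t) * (/2)^n /\
  Rabs (Gz (pic n) s - Gz sol s) <= LL * (4 * KK * EE t) * (/2)^n.
Proof.
  intros Hs. unfold Gx, Gz. rewrite Rmax_right by lra. unfold sol; simpl.
  pose proof (xs_tail s n ltac:(lra)). pose proof (zs_tail s n ltac:(lra)).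
  pose proof (EE_mono s t ltac:(lra)). pose proof LL1.
  assert (0 <= KK * (/2)^n) by (unfold KK; pose proof MM0; apply Rmult_le_pos; [lra|apply pow_le; lra]).
  assert (Hb : Rabs (fst (pic n s) - xs s) + Rabs (snd (pic n s) - zs s) <= 4 * KK * EE t * (/2)^n) by nra.
  split; (eapply Rle_trans; [first [apply Fx_lip|apply Fz_lip]|]);
  replace (LL * (4 * KK * EE t) * (/2)^n) with (LL * (4 * KK * EE t * (/2)^n)) by ring;
  apply Rmult_le_compat_l; lra.
Qed.

Lemma sol_int t : 0 <= t -> xs t = x0 + RInt (Gx sol) 0 t /\ zs t = z0 + RInt (Gz sol) 0 t.
Proof.
  intros Ht. destruct sol_cont as [Cx Cz].
  set (C := KK * EE t + t * (LL * (4 * KK * EE t))).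
  assert (HC : 0 <= C).
  { unfold C, KK. pose proof MM0. pose proof (EE_pos t). pose proof LL1.
    assert (0 <= MM * EE t) by (apply Rmult_le_pos; lra).
    assert (0 <= LL * (MM * EE t)) by (apply Rmult_le_pos; lra).
    assert (0 <= t * (LL * (MM * EE t))) by (apply Rmult_le_pos; lra).
    replace (2 * MM * EE t + t * (LL * (4 * (2 * MM) * EE t))) with (2 * (MM * EE t) + 8 * (t * (LL * (MM * EE t)))) by ring.
    lra. }
  split.
  - assert (Hz : xs t - (x0 + RInt (Gx sol) 0 t) = 0); [|lra].
    apply (small_zero _ C). intros n.
    destruct (pic_cont n) as [Cn _].
    pose proof (xs_tail t (S n) Ht) as H1.
    change (fst (pic (S n) t)) with (x0 + RInt (Gx (pic n)) 0 t) in H1.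
    assert (H2 : Rabs (RInt (Gx (pic n)) 0 t - RInt (Gx sol) 0 t) <= t * (LL * (4 * KK * EE t) * (/2)^n)).
    { rewrite <- RInt_sub_R by auto.
      eapply Rle_trans. apply (int_bound _ (fun _ => LL * (4 * KK * EE t) * (/2)^n)); auto.
      apply Cont_minus; auto. apply Cont_const. intros s Hs; apply (G_close n s t Hs).
      rewrite RInt_const_R. lra. }
    replace (xs t - (x0 + RInt (Gx sol) 0 t)) with (- (x0 + RInt (Gx (pic n)) 0 t - xs t) + (RInt (Gx (pic n)) 0 t - RInt (Gx sol) 0 t)) by ring.
    eapply Rle_trans. apply Rabs_triang. rewrite Rabs_Ropp.
    unfold C. simpl pow in H1. lra.
  - assert (Hz : zs t - (z0 + RInt (Gz sol) 0 t) = 0); [|lra].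
    apply (small_zero _ C). intros n.
    destruct (pic_cont n) as [_ Cn].
    pose proof (zs_tail t (S n) Ht) as H1.
    change (snd (pic (S n) t)) with (z0 + RInt (Gz (pic n)) 0 t) in H1.
    assert (H2 : Rabs (RInt (Gz (pic n)) 0 t - RInt (Gz sol) 0 t) <= t * (LL * (4 * KK * EE t) * (/2)^n)).
    { rewrite <- RInt_sub_R by auto.
      eapply Rle_trans. apply (int_bound _ (fun _ => LL * (4 * KK * EE t) * (/2)^n)); auto.
      apply Cont_minus; auto. apply Cont_const. intros s Hs; apply (G_close n s t Hs).
      rewrite RInt_const_R. lra. }
    replace (zs t - (z0 + RInt (Gz sol) 0 t)) with (- (z0 + RInt (Gz (pic n)) 0 t - zs t) + (RInt (Gz (pic n)) 0 t - RInt (Gz sol) 0 t)) by ring.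
    eapply Rle_trans. apply Rabs_triang. rewrite Rabs_Ropp.
    unfold C. simpl pow in H1. lra.
Qed.

Lemma der_int g c t : Cont g -> is_derive (fun b => c + RInt g 0 b) t (g t).
Proof.
  intros Hg.
  assert (H : is_derive (fun b => RInt g 0 b) t (g t)).
  { apply (is_derive_RInt g (fun b => RInt g 0 b) 0 t).
    - exists (mkposreal 1 Rlt_0_1). intros y _. apply (RInt_correct (V:=R_CompleteNormedModule)). apply Cont_exRInt; auto.
    - apply Hg. }
  assert (H0 : is_derive (fun _ : R => c) t 0) by (apply (is_derive_const c t)).
  pose proof (plus_der _ _ t _ _ H0 H) as H1. rewrite Rplus_0_l in H1. exact H1.
Qed.

Definition xsol t := x0 + RInt (Gx sol) 0 t.
Definition zsol t := z0 + RInt (Gz sol) 0 t.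

Lemma sol_der t : 0 <= t -> is_derive xsol t (Fx (xsol t) (zsol t)) /\ is_derive zsol t (Fz (xsol t) (zsol t)).
Proof.
  intros Ht. destruct sol_cont as [Cx Cz]. destruct (sol_int t Ht) as [E1 E2].
  unfold xsol, zsol. rewrite <- E1, <- E2. split.
  - pose proof (der_int (Gx sol) x0 t Cx). unfold Gx in H at 2. rewrite Rmax_right in H by lra. exact H.
  - pose proof (der_int (Gz sol) z0 t Cz). unfold Gz in H at 2. rewrite Rmax_right in H by lra. exact H.
Qed.

Lemma xsol_ge t : 0 <= t -> 0 <= xsol t.
Proof.
  intros H. apply (barrier_is xsol 0 t 0 H).
  - intros s Hs. exists (Fx (xsol s) (zsol s)). split. apply sol_der; lra.
    intros Hl. unfold Fx, cx. rewrite clamp_lo; [|pose proof XX6; lra|auto]. pose proof (inv_pos (cz (zsol s))). lra.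
  - unfold xsol. rewrite RInt_point_R. lra.
Qed.

Lemma xsol_le t : 0 <= t -> xsol t <= XX.
Proof.
  intros H. assert (- XX <= - xsol t); [|lra].
  apply (barrier_is (fun s => - xsol s) 0 t (- XX) H).
  - intros s Hs. exists (- Fx (xsol s) (zsol s)). split. apply opp_der, sol_der; lra.
    intros Hl. unfold Fx, cx. rewrite clamp_hi; [|pose proof XX6; lra|lra].
    pose proof (inv_le1 (cz (zsol s))). pose proof XX6. lra.
  - unfold xsol. rewrite RInt_point_R. pose proof XXx. lra.
Qed.

Lemma zsol_ge t : 0 <= t -> 0 <= zsol t.
Proof.
  intros H. apply (barrier_is zsol 0 t 0 H).
  - intros s Hs. exists (Fz (xsol s) (zsol s)). split. apply sol_der; lra.
    intros Hl. unfold Fz, cz. rewrite clamp_lo; [|pose proof XX6; unfold ZZ; lra|auto].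
    pose proof (cx_range (xsol s)). unfold P. lra.
  - unfold zsol. rewrite RInt_point_R. lra.
Qed.

Lemma zsol_le t : 0 <= t -> zsol t <= ZZ.
Proof.
  intros H. assert (- ZZ <= - zsol t); [|lra].
  apply (barrier_is (fun s => - zsol s) 0 t (- ZZ) H).
  - intros s Hs. exists (- Fz (xsol s) (zsol s)). split. apply opp_der, sol_der; lra.
    intros Hl. unfold Fz, cz. rewrite clamp_hi; [|pose proof XX6; unfold ZZ; lra|lra].
    pose proof (cx_range (xsol s)). pose proof ZZX. pose proof XX6.
    pose proof (P_ge3z ZZ ltac:(lra)). lra.
  - unfold zsol. rewrite RInt_point_R. unfold ZZ. pose proof XX6. lra.
Qed.

Lemma exists_traj : exists x z : R -> R, x 0 = x0 /\ z 0 = z0 /\ is_traj x z.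
Proof.
  exists xsol, zsol. split; [unfold xsol; rewrite RInt_point_R; lra|].
  split; [unfold zsol; rewrite RInt_point_R; lra|].
  intros t Ht. destruct (sol_der t Ht) as [D1 D2].
  assert (Ex : cx (xsol t) = xsol t) by (apply clamp_id; split; [apply xsol_ge|apply xsol_le]; auto).
  assert (Ez : cz (zsol t) = zsol t) by (apply clamp_id; split; [apply zsol_ge|apply zsol_le]; auto).
  unfold Fx, Fz in D1, D2. rewrite Ex, Ez in D1, D2. split; auto.
Qed.

End Picard.

Theorem mainTheorem5 :
  (forall x0 z0, 0 <= x0 -> 0 <= z0 ->
     exists x z : R -> R, x 0 = x0 /\ z 0 = z0 /\ is_traj x z)
  /\
  (forall y, 5 < y -> exists! z, k2rel y z)
  /\
  exists xbar zbar : R,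
    5 / 2 < zbar /\ k2rel (k1 zbar) zbar /\
    (forall w, 5 / 2 <= w -> k2rel (k1 w) w -> w = zbar) /\
    xbar = k1 zbar /\
    (forall a b, 0 <= a -> 0 <= b ->
       (fx a b = 0 /\ fz a b = 0 <-> a = xbar /\ b = zbar)) /\
    (forall x z : R -> R, 0 <= x 0 -> 0 <= z 0 -> is_traj x z ->
       (forall t, 0 <= t -> 0 <= x t /\ 0 <= z t) /\
       (exists M, forall t, 0 <= t -> Rabs (x t) <= M /\ Rabs (z t) <= M) /\
       is_lim x p_infty (Finite xbar) /\ is_lim z p_infty (Finite zbar))
  /\
  (forall y, (0 <= y < 4 \/ 5 < y) -> exists! z, k2set y z) /\
  (forall y, 4 < y < 5 ->
     exists z1 z2 z3, z1 < z2 < z3 /\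
       forall z, k2set y z <-> (z = z1 \/ z = z2 \/ z = z3)) /\
  (forall z, k2set 4 z <-> (z = 1 / 2 \/ z = 2)) /\
  (forall z, k2set 5 z <-> (z = 1 \/ z = 5 / 2)).
Proof.
  split. { intros x0 z0 H1 H2. apply exists_traj; auto. }
  split. { apply k2rel_uniq. }
  destruct fixpt as [zb [Hzb [Pzb Hu]]].
  exists (k1 zb), zb.
  split. lra.
  split. split; auto. lra.
  split. { intros w Hw [_ Pw]. apply Hu; auto. }
  split. reflexivity.
  split.
  { intros a b Ha Hb. split.
    - intros [E1 E2]. unfold fx in E1. unfold fz in E2.
      assert (Hak : a = k1 b) by (unfold k1; lra).
      assert (Hb5 : 5/2 < b).
      { destruct (Rlt_le_dec (5/2) b) as [|Hle]; auto. pose proof (P_le5 b Hle).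
        pose proof (inv_pos b). unfold k1 in Hak. lra. }
      assert (b = zb) by (apply Hu; [lra| rewrite <- Hak; lra]).
      subst b. split; auto.
    - intros [-> ->]. split. unfold fx, k1; lra. unfold fz; lra. }
  split.
  { intros x z H0 H1 Ht. split.
    - intros t Htt. split; [apply (tx_nonneg x z H0 Ht t Htt)|apply (tz_nonneg x z H0 H1 Ht t Htt)].
    - split.
      + exists (Rmax (XB x) (ZB x z)). intros t Htt.
        pose proof (tx_nonneg x z H0 Ht t Htt). pose proof (tz_nonneg x z H0 H1 Ht t Htt).
        pose proof (tx_le x z Ht t Htt). pose proof (tz_le x z H0 H1 Ht t Htt).
        pose proof (Rmax_l (XB x) (ZB x z)). pose proof (Rmax_r (XB x) (ZB x z)).
        rewrite !Rabs_right by lra. lra.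
      + apply (t_conv x z H0 H1 Ht (k1 zb) zb); auto. }
  split. { intros y [Hy|Hy]; [apply k2set_low|apply k2set_high]; auto. }
  split. { apply k2set_mid. }
  split. { apply k2set_4. }
  apply k2set_5.
Qed.
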